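(* Let $x_0,y_0$ be positive integers and let $\{(X_t,Y_t)\}_{t\ge 0}$ be the CA competition process with fitness ratio $r=1$ started at $(X_0,Y_0)=(x_0,y_0)$. Let $T=\sup\{t\ge 0: X_t=Y_t\}$ (with $\sup\emptyset=-\infty$). Then, as $t\to\infty$ through the integers, \[ \mathbb{P}[T\ge t]\sim \frac{1}{2^{x_0+y_0-5/2}\sqrt{\pi}\,B(x_0,y_0)}\, t^{-1/2}, \] where $B(x,y)=\int_0^1 s^{x-1}(1-s)^{y-1}\,ds$ is the beta function.
   Context: The CA competition process with fitness ratio $r\ge 1$ started at $(x_0,y_0)$ is the discrete-time Markov chain $\{(X_t,Y_t)\}_{t\ge0}$ on $\{(x,y)\in\mathbb{Z}^2: x\ge1,y\ge1\}$ with $(X_0,Y_0)=(x_0,y_0)$ and transition probabilities: from $(x,y)$ it moves to $(x+1,y)$ with probability $\frac{rx}{rx+y}$ and to $(x,y+1)$ with probability $\frac{y}{rx+y}$. The notation $f(t)\sim g(t)$ means $\lim_{t\to\infty} f(t)/g(t)=1$. *)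

(* Defs.v *)
From Stdlib Require Import Reals List.
From Coquelicot Require Import Coquelicot.
Open Scope R_scope.

(* A finite trajectory of the CA competition process is encoded by its list of
   moves: [true] = the step (x,y) -> (x+1,y), [false] = (x,y) -> (x,y+1). *)

Fixpoint path_prob (r : R) (x y : nat) (l : list bool) : R :=
  match l with
  | nil => 1
  | true :: l' => (r * INR x / (r * INR x + INR y)) * path_prob r (S x) y l'
  | false :: l' => (INR y / (r * INR x + INR y)) * path_prob r x (S y) l'
  end.

(* [hits_from t x y l] : along the trajectory started at (x,y) with moves l,
   there is a time s with t <= s <= length l and X_s = Y_s. *)
Fixpoint hits_from (t x y : nat) (l : list bool) : bool :=
  (Nat.eqb t 0 && Nat.eqb x y) ||
  match l with
  | nil => false
  | true :: l' => hits_from (pred t) (S x) y l'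
  | false :: l' => hits_from (pred t) x (S y) l'
  end.

Fixpoint all_paths (N : nat) : list (list bool) :=
  match N with
  | O => nil :: nil
  | S N' => map (cons true) (all_paths N') ++ map (cons false) (all_paths N')
  end.

Definition prob_hit_between (r : R) (x0 y0 t N : nat) : R :=
  fold_right Rplus 0
    (map (fun l => path_prob r x0 y0 l * (if hits_from t x0 y0 l then 1 else 0))
         (all_paths N)).

(* P[T >= t] = P[ exists s >= t, X_s = Y_s ]
   = lim_{N -> oo} P[ exists s in [t,N], X_s = Y_s ]  (continuity from below). *)
Definition prob_T_ge (r : R) (x0 y0 t : nat) : R :=
  real (Lim_seq (fun N => prob_hit_between r x0 y0 t N)).

Definition Beta (x y : nat) : R :=
  RInt (fun s => s ^ (x - 1) * (1 - s) ^ (y - 1)) 0 1.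

(* Main.v *)
Require Import Defs.
From Stdlib Require Import Reals Lra Lia List.
From Coquelicot Require Import Coquelicot.
Open Scope R_scope.


Fixpoint T (M s : nat) : R :=
  match M with
  | O => match s with O => 1 | S _ => 0 end
  | S M' => match s with O => 2 * T M' O | S s' => T M' (S s') + T M' s' end
  end.

Lemma T_0 M : T M 0 = 2 ^ M.
Proof. induction M; simpl; [reflexivity| rewrite IHM; ring]. Qed.

Lemma T_big M s : (M < s)%nat -> T M s = 0.
Proof.
  revert s; induction M; intros s Hs.
  - destruct s; [lia|reflexivity].
  - destruct s; [lia|]. simpl. rewrite !IHM by lia. ring.
Qed.

Lemma T_nonneg M s : 0 <= T M s.
Proof.
  revert s; induction M; intros s; destruct s; simpl; try lra.
  - specialize (IHM 0%nat); lra.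
  - pose proof (IHM (S s)); pose proof (IHM s); lra.
Qed.

Lemma T_sym M s : (s <= S M)%nat -> T M s + T M (S M - s) = 2 ^ M.
Proof.
  revert s; induction M; intros s Hs.
  - destruct s as [|[|s]]; simpl; try lra; lia.
  - destruct s as [|s'].
    + rewrite T_0, T_big by lia. ring.
    + destruct (Nat.eq_dec s' (S M)) as [->|Hne].
      * rewrite Nat.sub_diag, T_0, T_big by lia. ring.
      * replace (S (S M) - S s')%nat with (S (M - s')) by lia.
        change (T (S M) (S s')) with (T M (S s') + T M s').
        change (T (S M) (S (M - s'))) with (T M (S (M - s')) + T M (M - s')).
        pose proof (IHM (S s') ltac:(lia)) as H1.
        pose proof (IHM s' ltac:(lia)) as H2.
        replace (S M - S s')%nat with (M - s')%nat in H1 by lia.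
        replace (S M - s')%nat with (S (M - s'))%nat in H2 by lia.
        simpl. lra.
Qed.

Definition Cb M s := T M s - T M (S s).

Lemma Cb_big M s : (M < s)%nat -> Cb M s = 0.
Proof. intros; unfold Cb; rewrite !T_big by lia; ring. Qed.

Lemma Cb_pascal M s : Cb (S M) (S s) = Cb M (S s) + Cb M s.
Proof. unfold Cb. simpl. ring. Qed.

Lemma Cb_pascal0 M : Cb (S M) 0 = Cb M 0.
Proof. unfold Cb. simpl. ring. Qed.

Lemma Cb_rec M s : INR (S s) * Cb M (S s) = (INR M - INR s) * Cb M s.
Proof.
  revert s; induction M; intros s.
  - destruct s; unfold Cb; simpl; ring.
  - destruct s as [|s'].
    + rewrite Cb_pascal, Cb_pascal0.
      pose proof (IHM 0%nat) as H. rewrite S_INR in *. simpl in *.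
      replace (match M with 0%nat => 1 | S _ => INR M + 1 end) with (INR M + 1)
        by (destruct M; simpl; lra).
      lra.
    + rewrite (Cb_pascal M (S s')), (Cb_pascal M s').
      pose proof (IHM (S s')) as H1. pose proof (IHM s') as H2.
      rewrite !S_INR in *. nra.
Qed.

Definition h (x y : nat) : R := 2 * T (pred (x + y)) (Nat.max x y) / 2 ^ (pred (x + y)).

Lemma h_sym x y : h x y = h y x.
Proof. unfold h. rewrite Nat.add_comm, Nat.max_comm. reflexivity. Qed.

Lemma h_nonneg x y : 0 <= h x y.
Proof.
  unfold h. apply Rmult_le_pos. pose proof (T_nonneg (pred (x+y)) (Nat.max x y)); lra.
  left; apply Rinv_0_lt_compat, pow_lt; lra.
Qed.

Lemma h_diag m : (1 <= m)%nat -> h m m = 1.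
Proof.
  intros Hm. unfold h. rewrite Nat.max_id.
  pose proof (T_sym (pred (m+m)) m ltac:(lia)) as H.
  replace (S (pred (m + m)) - m)%nat with m in H by lia.
  destruct (pred (m+m)) as [|M] eqn:E; [lia|].
  set (X := T (S M) m) in *. assert (HP: 0 < 2 ^ S M) by (apply pow_lt; lra).
  apply (Rmult_eq_reg_r (2 ^ S M)); [|lra]. field_simplify; lra.
Qed.

Definition pr (x y : nat) : R := INR x / (INR x + INR y).
Definition qr (x y : nat) : R := INR y / (INR x + INR y).

Definition Pf (f : nat -> nat -> R) (x y : nat) : R :=
  pr x y * f (S x) y + qr x y * f x (S y).

Lemma h_harm_gt x y : (y < x)%nat -> h x y = Pf h x y.
Proof.
  intros Hxy. unfold Pf, pr, qr, h.
  destruct x as [|x']; [lia|].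
  replace (pred (S x' + y)) with (x' + y)%nat by lia.
  replace (pred (S (S x') + y)) with (S (x' + y)) by lia.
  replace (pred (S x' + S y)) with (S (x' + y)) by lia.
  replace (Nat.max (S x') y) with (S x') by lia.
  replace (Nat.max (S (S x')) y) with (S (S x')) by lia.
  replace (Nat.max (S x') (S y)) with (S x') by lia.
  change (T (S (x' + y)) (S (S x'))) with (T (x'+y) (S (S x')) + T (x'+y) (S x')).
  change (T (S (x' + y)) (S x')) with (T (x'+y) (S x') + T (x'+y) x').
  pose proof (Cb_rec (x'+y) x') as HC. unfold Cb in HC.
  rewrite plus_INR in HC.
  assert (Hp : 0 < INR (S x') + INR y) by (rewrite S_INR; pose proof (pos_INR x'); pose proof (pos_INR y); lra).
  simpl pow.
  set (a := T (x'+y) (S x')) in *. set (b := T (x'+y) (S (S x'))) in *.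
  set (c := T (x'+y) x') in *. set (P := 2 ^ (x'+y)) in *.
  assert (HP : 0 < P) by (apply pow_lt; lra).
  rewrite S_INR in *.
  assert (HC' : (INR x' + 1) * (a - b) = INR y * (c - a)) by (rewrite HC; ring).
  apply (Rmult_eq_reg_r (P * (INR x' + 1 + INR y))); [|nra].
  field_simplify; try lra.
Qed.

Lemma h_harm_lt x y : (x < y)%nat -> h x y = Pf h x y.
Proof.
  intros Hxy. rewrite h_sym, h_harm_gt by lia. unfold Pf, pr, qr.
  rewrite (h_sym (S y) x), (h_sym y (S x)), (Rplus_comm (INR y) (INR x)). ring.
Qed.

Lemma h_harm x y : x <> y -> h x y = Pf h x y.
Proof. intros H. destruct (Nat.lt_ge_cases x y); [apply h_harm_lt|apply h_harm_gt]; lia. Qed.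

Definition cc (m : nat) : R := 1 - h (S m) m.

Lemma cc_Cb m : cc m = Cb (m + m) m / 2 ^ (m + m).
Proof.
  unfold cc, h, Cb. replace (pred (S m + m)) with (m + m)%nat by lia.
  replace (Nat.max (S m) m) with (S m) by lia.
  pose proof (T_sym (m+m) (S m) ltac:(lia)) as H.
  replace (S (m + m) - S m)%nat with m in H by lia.
  assert (HP : 0 < 2 ^ (m+m)) by (apply pow_lt; lra).
  apply (Rmult_eq_reg_r (2 ^ (m+m))); [|lra]. field_simplify; lra.
Qed.

Lemma cc_0 : cc 0 = 1.
Proof. unfold cc, h. simpl. lra. Qed.

Lemma cc_S m : cc (S m) = cc m * (2 * INR m + 1) / (2 * INR m + 2).
Proof.
  rewrite !cc_Cb. replace (S m + S m)%nat with (S (S (m + m))) by lia.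
  rewrite Cb_pascal.
  pose proof (Cb_rec (S (m+m)) m) as H1.
  pose proof (Cb_rec (m+m) m) as H2.
  rewrite Cb_pascal in H1.
  pose proof (Cb_pascal (m+m) m) as H3.
  rewrite !S_INR, !plus_INR in *.
  assert (HP : 0 < 2 ^ (m+m)) by (apply pow_lt; lra).
  pose proof (pos_INR m).
  set (A := Cb (m+m) m) in *. set (B := Cb (m+m) (S m)) in *.
  set (D := Cb (S (m+m)) m) in *.
  assert (HB : B = A * INR m / (INR m + 1)) by (apply (Rmult_eq_reg_r (INR m + 1)); [|lra]; field_simplify; lra).
  rewrite H3.
  assert (HD : D = B + A) by nra.
  simpl pow.
  rewrite HD, HB. field. lra.
Qed.

Lemma h_Pf_diag m : (1 <= m)%nat -> h m m - Pf h m m = cc m.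
Proof.
  intros Hm. rewrite h_diag by lia. unfold Pf, pr, qr, cc.
  rewrite (h_sym m (S m)).
  assert (0 < INR m) by (apply lt_0_INR; lia).
  replace (INR m / (INR m + INR m)) with (1/2) by (field; lra). lra.
Qed.

Definition g (a b : nat) : R := if Nat.eq_dec a b then cc a else 0.

Lemma cc_pos m : 0 < cc m.
Proof.
  induction m. rewrite cc_0; lra. rewrite cc_S. pose proof (pos_INR m).
  apply Rmult_lt_0_compat; [|apply Rinv_0_lt_compat; lra].
  apply Rmult_lt_0_compat; lra.
Qed.

Lemma cc_sq m : cc m ^ 2 <= 1 / (2 * INR m + 1).
Proof.
  induction m.
  - rewrite cc_0; simpl; lra.
  - rewrite cc_S, S_INR. pose proof (pos_INR m).
    replace ((cc m * (2 * INR m + 1) / (2 * INR m + 2)) ^ 2) with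
      (cc m ^ 2 * ((2 * INR m + 1)^2 / (2 * INR m + 2)^2)) by (field; lra).
    apply Rle_trans with (1 / (2 * INR m + 1) * ((2 * INR m + 1) ^ 2 / (2 * INR m + 2) ^ 2)).
    + apply Rmult_le_compat_r; [|exact IHm].
      apply Rmult_le_pos; [nra|]. left; apply Rinv_0_lt_compat; nra.
    + apply Rmult_le_reg_r with ((2 * INR m + 2)^2 * (2 * (INR m + 1) + 1)); [nra|].
      field_simplify; try lra.
Qed.

Lemma g_nonneg a b : 0 <= g a b.
Proof. unfold g. destruct Nat.eq_dec; [left; apply cc_pos|lra]. Qed.

Lemma h_Pf a b : (1 <= a)%nat -> (1 <= b)%nat -> h a b - Pf h a b = g a b.
Proof.
  intros Ha Hb. unfold g. destruct Nat.eq_dec as [->|Hne].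
  - apply h_Pf_diag; lia.
  - rewrite <- h_harm by exact Hne. ring.
Qed.


Lemma pr_nonneg x y : 0 <= pr x y.
Proof.
  unfold pr. pose proof (pos_INR x); pose proof (pos_INR y).
  destruct (Req_dec (INR x + INR y) 0) as [E|E].
  - unfold Rdiv; rewrite E, Rinv_0. lra.
  - apply Rmult_le_pos; [lra|]. left; apply Rinv_0_lt_compat; lra.
Qed.

Lemma qr_nonneg x y : 0 <= qr x y.
Proof.
  unfold qr. pose proof (pos_INR x); pose proof (pos_INR y).
  destruct (Req_dec (INR x + INR y) 0) as [E|E].
  - unfold Rdiv; rewrite E, Rinv_0. lra.
  - apply Rmult_le_pos; [lra|]. left; apply Rinv_0_lt_compat; lra.
Qed.

Lemma pr_qr x y : (1 <= x + y)%nat -> pr x y + qr x y = 1.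
Proof.
  intros H. unfold pr, qr. assert (0 < INR x + INR y).
  { rewrite <- plus_INR. apply lt_0_INR. lia. }
  field. lra.
Qed.

Fixpoint Op (t : nat) (f : nat -> nat -> R) (x y : nat) : R :=
  match t with
  | O => f x y
  | S t' => pr x y * Op t' f (S x) y + qr x y * Op t' f x (S y)
  end.

Lemma Op_S_r t f x y : Op (S t) f x y = Op t (Pf f) x y.
Proof.
  revert x y; induction t; intros x y.
  - reflexivity.
  - change (Op (S (S t)) f x y) with (pr x y * Op (S t) f (S x) y + qr x y * Op (S t) f x (S y)).
    rewrite !IHt. reflexivity.
Qed.

Lemma Op_ext t f f' x y :
  (forall a b, (x <= a)%nat -> (y <= b)%nat -> f a b = f' a b) -> Op t f x y = Op t f' x y.
Proof.
  revert x y; induction t; intros x y H; simpl.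
  - apply H; lia.
  - rewrite (IHt (S x) y), (IHt x (S y)); [reflexivity| |]; intros; apply H; lia.
Qed.

Lemma Op_le t f f' x y :
  (forall a b, (x <= a)%nat -> (y <= b)%nat -> f a b <= f' a b) -> Op t f x y <= Op t f' x y.
Proof.
  revert x y; induction t; intros x y H; simpl.
  - apply H; lia.
  - pose proof (pr_nonneg x y); pose proof (qr_nonneg x y).
    apply Rplus_le_compat; apply Rmult_le_compat_l; auto; apply IHt; intros; apply H; lia.
Qed.

Lemma Op_lin t f f' al be x y :
  Op t (fun a b => al * f a b + be * f' a b) x y = al * Op t f x y + be * Op t f' x y.
Proof.
  revert x y; induction t; intros x y; simpl. reflexivity.
  rewrite !IHt. ring.
Qed.

Lemma Op_nonneg t f x y :
  (forall a b, (x <= a)%nat -> (y <= b)%nat -> 0 <= f a b) -> 0 <= Op t f x y.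
Proof.
  intros H. replace 0 with (Op t (fun _ _ => 0) x y).
  - apply Op_le. exact H.
  - clear H; revert x y; induction t; intros; simpl; auto. rewrite !IHt; ring.
Qed.

Definition V t x y := Op t h x y.

Lemma V_diff t x y : (1 <= x)%nat -> (1 <= y)%nat -> V t x y - V (S t) x y = Op t g x y.
Proof.
  intros Hx Hy. unfold V. rewrite Op_S_r.
  replace (Op t h x y - Op t (Pf h) x y) with (Op t (fun a b => 1 * h a b + (-1) * Pf h a b) x y)
    by (rewrite Op_lin; ring).
  apply Op_ext. intros a b Ha Hb. rewrite <- h_Pf by lia. ring.
Qed.

Lemma V_nonneg t x y : 0 <= V t x y.
Proof. apply Op_nonneg. intros; apply h_nonneg. Qed.

Lemma V_decr t x y : (1 <= x)%nat -> (1 <= y)%nat -> V (S t) x y <= V t x y.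
Proof.
  intros Hx Hy. pose proof (V_diff t x y Hx Hy).
  pose proof (Op_nonneg t g x y (fun a b _ _ => g_nonneg a b)). lra.
Qed.


Fixpoint w (t x y k : nat) : R :=
  match t with
  | O => match k with O => 1 | S _ => 0 end
  | S t' => pr x y * (match k with O => 0 | S k' => w t' (S x) y k' end) + qr x y * w t' x (S y) k
  end.

Lemma w_big t x y k : (t < k)%nat -> w t x y k = 0.
Proof.
  revert x y k; induction t; intros x y k H; simpl.
  - destruct k; [lia|reflexivity].
  - destruct k; [lia|]. rewrite !IHt by lia. ring.
Qed.

Lemma sum_scal (a : nat -> R) c N : sum_f_R0 (fun k => c * a k) N = c * sum_f_R0 a N.
Proof. induction N; simpl; [|rewrite IHN]; ring. Qed.

Lemma sum_add (a b : nat -> R) N : sum_f_R0 (fun k => a k + b k) N = sum_f_R0 a N + sum_f_R0 b N.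
Proof. induction N; simpl; [|rewrite IHN]; ring. Qed.

Lemma sum_shift (a : nat -> R) N : sum_f_R0 a (S N) = a 0%nat + sum_f_R0 (fun k => a (S k)) N.
Proof. induction N; simpl in *. ring. rewrite IHN. ring. Qed.

Lemma Op_rep t f x y :
  Op t f x y = sum_f_R0 (fun k => w t x y k * f (x + k)%nat (y + (t - k))%nat) t.
Proof.
  revert x y; induction t; intros x y.
  - simpl. rewrite !Nat.add_0_r. ring.
  - simpl Op. rewrite !IHt.
    transitivity (sum_f_R0 (fun k => pr x y * (match k with O => 0 | S k' => w t (S x) y k' end) * f (x + k)%nat (y + (S t - k))%nat) (S t)
        + sum_f_R0 (fun k => qr x y * w t x (S y) k * f (x + k)%nat (y + (S t - k))%nat) (S t)).
    + f_equal.
      * rewrite sum_shift. rewrite <- sum_scal.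
        replace (pr x y * 0 * f (x + 0)%nat (y + (S t - 0))%nat) with 0 by ring.
        rewrite Rplus_0_l. apply sum_eq. intros i Hi.
        replace (x + S i)%nat with (S x + i)%nat by lia.
        replace (S t - S i)%nat with (t - i)%nat by lia. ring.
      * rewrite tech5, (w_big t x (S y) (S t)) by lia.
        rewrite Rmult_0_r, Rmult_0_l, Rplus_0_r. rewrite <- sum_scal.
        apply sum_eq. intros i Hi.
        replace (y + (S t - i))%nat with (S y + (t - i))%nat by lia. ring.
    + rewrite <- sum_add. apply sum_eq. intros i Hi. destruct i; simpl w; ring.
Qed.

Fixpoint Rf (x k : nat) : R :=
  match k with O => 1 | S k' => INR x * Rf (S x) k' end.

Lemma Rf_fact x k : (1 <= x)%nat -> Rf x k * INR (Factorial.fact (x - 1)) = INR (Factorial.fact (x + k - 1)).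
Proof.
  revert x; induction k; intros x Hx.
  - simpl. rewrite Nat.add_0_r. ring.
  - simpl Rf. specialize (IHk (S x) ltac:(lia)).
    replace (S x - 1)%nat with x in IHk by lia.
    replace (S x + k - 1)%nat with (x + S k - 1)%nat in IHk by lia.
    rewrite <- IHk. destruct x as [|x']; [lia|].
    replace (S x' - 1)%nat with x' by lia. rewrite fact_simpl, mult_INR. ring.
Qed.

Lemma Rf_pos x k : (1 <= x)%nat -> 0 < Rf x k.
Proof.
  revert x; induction k; intros x Hx; simpl. lra.
  apply Rmult_lt_0_compat. apply lt_0_INR; lia. apply IHk; lia.
Qed.

Lemma INR_fact_pos n : 0 < INR (Factorial.fact n).
Proof. apply lt_0_INR, Factorial.lt_O_fact. Qed.

Lemma C_n0 n : Binomial.C n 0 = 1.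
Proof. unfold Binomial.C. rewrite Nat.sub_0_r. simpl. pose proof (INR_fact_pos n). field. lra. Qed.

Lemma C_nn n : Binomial.C n n = 1.
Proof. unfold Binomial.C. rewrite Nat.sub_diag. simpl. pose proof (INR_fact_pos n). field. lra. Qed.

Lemma w_closed t x y k : (1 <= x + y)%nat -> (k <= t)%nat ->
  w t x y k = Binomial.C t k * Rf x k * Rf y (t - k) / Rf (x + y) t.
Proof.
  revert x y k; induction t; intros x y k Hxy Hk.
  - assert (k = 0%nat) by lia. subst. simpl. rewrite C_n0. field.
  - assert (Hn : 0 < INR x + INR y) by (rewrite <- plus_INR; apply lt_0_INR; lia).
    assert (HR : 0 < Rf (S (x + y)) t) by (apply Rf_pos; lia).
    simpl w. unfold pr, qr.
    replace (Rf (x + y) (S t)) with ((INR x + INR y) * Rf (S (x + y)) t) by (simpl; rewrite plus_INR; ring).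
    destruct k as [|k'].
    + rewrite IHt by lia. rewrite !C_n0. simpl Rf.
      replace (x + S y)%nat with (S (x + y)) by lia.
      rewrite Nat.sub_0_r. field. split; lra.
    + destruct (Nat.eq_dec k' t) as [->|Hne].
      * rewrite (w_big t x (S y) (S t)) by lia. rewrite IHt by lia.
        rewrite !C_nn, !Nat.sub_diag. simpl Rf.
        replace (S x + y)%nat with (S (x + y)) by lia. field. split; lra.
      * rewrite !IHt by lia.
        replace (S x + y)%nat with (S (x + y)) by lia.
        replace (x + S y)%nat with (S (x + y)) by lia.
        replace (S t - S k')%nat with (t - k')%nat by lia.
        replace (t - k')%nat with (S (t - S k')) by lia.
        rewrite <- (pascal t k') by lia.
        simpl Rf. field. split; lra.
Qed.

Lemma sum_single (a : nat -> R) N k0 : (k0 <= N)%nat ->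
  (forall k, (k <= N)%nat -> k <> k0 -> a k = 0) -> sum_f_R0 a N = a k0.
Proof.
  induction N; intros Hk H.
  - assert (k0 = 0%nat) by lia. subst. reflexivity.
  - rewrite tech5. destruct (Nat.eq_dec k0 (S N)) as [->|Hne].
    + rewrite sum_eq_R0. ring. intros n Hn. apply H; lia.
    + rewrite IHN by (try lia; intros; apply H; lia). rewrite (H (S N)) by lia. ring.
Qed.

Lemma Op_g_odd x y q : Op (2 * q + x + y + 1) g x y = 0.
Proof.
  rewrite Op_rep. apply sum_eq_R0. intros k Hk. unfold g.
  destruct Nat.eq_dec; [lia|ring].
Qed.

Lemma Op_g_even x y q : Op (2 * q + x + y) g x y = w (2 * q + x + y) x y (q + y) * cc (q + x + y).
Proof.
  rewrite Op_rep. rewrite (sum_single _ _ (q + y)).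
  - unfold g. destruct Nat.eq_dec; [|lia]. replace (x + (q + y))%nat with (q + x + y)%nat by lia. reflexivity.
  - lia.
  - intros k Hk Hne; unfold g; destruct Nat.eq_dec; [lia|ring].
Qed.

Lemma w11 t k : (k <= t)%nat -> w t 1 1 k = 1 / INR (S t).
Proof.
  intros Hk. rewrite w_closed by lia.
  pose proof (Rf_fact 1 k ltac:(lia)) as H1.
  pose proof (Rf_fact 1 (t - k) ltac:(lia)) as H2.
  pose proof (Rf_fact 2 t ltac:(lia)) as H3.
  simpl in H1, H2, H3. rewrite Rmult_1_r in H1, H2, H3.
  replace (1 + 1)%nat with 2%nat by reflexivity.
  rewrite H1, H2. replace (S (t + 0)) with (S t) in H3 by lia.
  rewrite !Nat.sub_0_r in *.
  unfold Binomial.C.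
  assert (Rf 2 t = INR (S t) * INR (Factorial.fact t)) by (rewrite H3, plus_INR, mult_INR, S_INR; ring).
  rewrite H.
  pose proof (INR_fact_pos t); pose proof (INR_fact_pos k); pose proof (INR_fact_pos (t-k)).
  assert (0 < INR (S t)) by (apply lt_0_INR; lia).
  field. repeat split; lra.
Qed.

Lemma Op_g11_even K : Op (2 * K) g 1 1 = cc (S K) / INR (S (2 * K)).
Proof.
  rewrite Op_rep. rewrite (sum_single _ _ K); cycle 1. lia.
  intros k Hk Hne; unfold g; destruct Nat.eq_dec; [lia|ring].
  rewrite w11 by lia. unfold g. destruct Nat.eq_dec; [|lia].
  replace (1 + K)%nat with (S K) by lia. field. apply not_0_INR. lia.
Qed.

Lemma Op_g11_odd K : Op (S (2 * K)) g 1 1 = 0.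
Proof.
  rewrite Op_rep. apply sum_eq_R0. intros k Hk. unfold g.
  destruct Nat.eq_dec; [lia|ring].
Qed.

Lemma V11 K : V (2 * K) 1 1 = cc K.
Proof.
  induction K.
  - unfold V. simpl. rewrite h_diag by lia. rewrite cc_0. reflexivity.
  - pose proof (V_diff (2 * K) 1 1 ltac:(lia) ltac:(lia)) as H1.
    pose proof (V_diff (S (2 * K)) 1 1 ltac:(lia) ltac:(lia)) as H2.
    rewrite Op_g11_even in H1. rewrite Op_g11_odd in H2.
    replace (2 * S K)%nat with (S (S (2 * K))) by lia.
    rewrite cc_S in H1.
    assert (E : V (S (S (2 * K))) 1 1 = V (2 * K) 1 1 - cc K * (2 * INR K + 1) / (2 * INR K + 2) / INR (S (2 * K))) by lra.
    rewrite E, IHK, cc_S. rewrite S_INR, mult_INR. simpl (INR 2).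
    pose proof (pos_INR K). field. lra.
Qed.


Lemma lim0_decr (u : nat -> R) : (forall t, 0 <= u t) -> (forall t, u (S t) <= u t) ->
  (forall eps, 0 < eps -> exists t, u t < eps) -> is_lim_seq u 0.
Proof.
  intros H0 Hd He. apply is_lim_seq_spec. intros eps.
  destruct (He eps (cond_pos eps)) as [t0 Ht0]. exists t0. intros n Hn.
  assert (u n <= u t0).
  { induction Hn. lra. pose proof (Hd m). lra. }
  rewrite Rminus_0_r, Rabs_pos_eq by apply H0. lra.
Qed.

Lemma cc_small eps : 0 < eps -> exists K, cc K < eps.
Proof.
  intros He. destruct (archimed_cor1 (eps * eps) ltac:(nra)) as [N [HN HN0]].
  exists N. pose proof (cc_sq N) as Hs. pose proof (cc_pos N).
  assert (0 < INR N) by (apply lt_0_INR; lia).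
  assert (1 / (2 * INR N + 1) < / INR N).
  { apply Rmult_lt_reg_r with ((2 * INR N + 1) * INR N); [nra|]. field_simplify; lra. }
  simpl in Hs. nra.
Qed.

Lemma V_step t x y : V (S t) x y = pr x y * V t (S x) y + qr x y * V t x (S y).
Proof. reflexivity. Qed.

Lemma V11_lim : is_lim_seq (fun t => V t 1 1) 0.
Proof.
  apply lim0_decr. intros; apply V_nonneg. intros; apply V_decr; lia.
  intros eps He. destruct (cc_small eps He) as [K HK]. exists (2 * K)%nat. rewrite V11. exact HK.
Qed.

Lemma V_lim x y : (1 <= x)%nat -> (1 <= y)%nat -> is_lim_seq (fun t => V t x y) 0.
Proof.
  intros Hx Hy.
  assert (Hy1 : forall y, (1 <= y)%nat -> is_lim_seq (fun t => V t 1 y) 0).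
  { intros y' Hy'. induction Hy'. exact V11_lim.
    assert (Hq : 0 < qr 1 m) by (unfold qr; apply Rmult_lt_0_compat; [apply lt_0_INR; lia| apply Rinv_0_lt_compat; simpl; pose proof (pos_INR m); lra]).
    apply is_lim_seq_le_le with (fun _ => 0) (fun t => / qr 1 m * V (S t) 1 m).
    - intros t. split. apply V_nonneg. rewrite V_step.
      pose proof (pr_nonneg 1 m). pose proof (V_nonneg t 2 m).
      apply Rmult_le_reg_l with (qr 1 m); [lra|]. field_simplify; [|lra]. nra.
    - apply is_lim_seq_const.
    - replace (Finite 0) with (Rbar_mult (/ qr 1 m) 0) by (simpl; f_equal; ring).
      apply is_lim_seq_scal_l. apply (is_lim_seq_incr_1 (fun t => V t 1 m)). exact IHHy'. }
  induction Hx. apply Hy1; lia.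
  assert (Hp : 0 < pr m y) by (unfold pr; apply Rmult_lt_0_compat; [apply lt_0_INR; lia| apply Rinv_0_lt_compat; pose proof (lt_0_INR m ltac:(lia)); pose proof (pos_INR y); lra]).
  apply is_lim_seq_le_le with (fun _ => 0) (fun t => / pr m y * V (S t) m y).
  - intros t. split. apply V_nonneg. rewrite V_step.
    pose proof (qr_nonneg m y). pose proof (V_nonneg t m (S y)).
    apply Rmult_le_reg_l with (pr m y); [lra|]. field_simplify; [|lra]. nra.
  - apply is_lim_seq_const.
  - replace (Finite 0) with (Rbar_mult (/ pr m y) 0) by (simpl; f_equal; ring).
    apply is_lim_seq_scal_l. apply (is_lim_seq_incr_1 (fun t => V t m y)). exact IHHx.
Qed.


Lemma fold_app (l1 l2 : list R) : fold_right Rplus 0 (l1 ++ l2) = fold_right Rplus 0 l1 + fold_right Rplus 0 l2.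
Proof. induction l1; simpl. ring. rewrite IHl1. ring. Qed.

Lemma fold_scal (F : list bool -> R) c L :
  fold_right Rplus 0 (map (fun l => c * F l) L) = c * fold_right Rplus 0 (map F L).
Proof. induction L; simpl. ring. rewrite IHL. ring. Qed.

Lemma fold_ext (F G : list bool -> R) L : (forall l, F l = G l) ->
  fold_right Rplus 0 (map F L) = fold_right Rplus 0 (map G L).
Proof. intros H; induction L; simpl. ring. rewrite IHL, H. ring. Qed.

Lemma sum_paths_S (F : list bool -> R) N :
  fold_right Rplus 0 (map F (all_paths (S N))) =
  fold_right Rplus 0 (map (fun l => F (true :: l)) (all_paths N)) +
  fold_right Rplus 0 (map (fun l => F (false :: l)) (all_paths N)).
Proof. simpl. rewrite map_app, fold_app, !map_map. reflexivity. Qed.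

Lemma pp_true x y l : path_prob 1 x y (true :: l) = pr x y * path_prob 1 (S x) y l.
Proof. simpl. unfold pr. rewrite Rmult_1_l. reflexivity. Qed.

Lemma pp_false x y l : path_prob 1 x y (false :: l) = qr x y * path_prob 1 x (S y) l.
Proof. simpl. unfold qr. rewrite Rmult_1_l. reflexivity. Qed.

Lemma total_prob N x y : (1 <= x + y)%nat ->
  fold_right Rplus 0 (map (path_prob 1 x y) (all_paths N)) = 1.
Proof.
  revert x y; induction N; intros x y H.
  - simpl. ring.
  - rewrite sum_paths_S.
    rewrite (fold_ext _ (fun l => pr x y * path_prob 1 (S x) y l)) by (intros; apply pp_true).
    rewrite (fold_ext (fun l => path_prob 1 x y (false :: l)) (fun l => qr x y * path_prob 1 x (S y) l)) by (intros; apply pp_false).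
    rewrite !fold_scal, !IHN by lia. rewrite !Rmult_1_r. apply pr_qr. exact H.
Qed.

Definition E t x y N := prob_hit_between 1 x y t N.

Lemma E_0 t x y : E t x y 0 = if (Nat.eqb t 0 && Nat.eqb x y)%bool then 1 else 0.
Proof. unfold E, prob_hit_between. simpl. rewrite Bool.orb_false_r. destruct (_ && _)%bool; ring. Qed.

Lemma E_S t x y N : (1 <= x + y)%nat ->
  E t x y (S N) = if (Nat.eqb t 0 && Nat.eqb x y)%bool then 1
                  else pr x y * E (pred t) (S x) y N + qr x y * E (pred t) x (S y) N.
Proof.
  intros H. unfold E, prob_hit_between. rewrite sum_paths_S.
  destruct (Nat.eqb t 0 && Nat.eqb x y)%bool eqn:Eb.
  - rewrite (fold_ext _ (fun l => pr x y * path_prob 1 (S x) y l)).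
    2:{ intros l. rewrite pp_true. simpl hits_from. rewrite Eb. simpl. ring. }
    rewrite (fold_ext (fun l => path_prob 1 x y (false :: l) * _) (fun l => qr x y * path_prob 1 x (S y) l)).
    2:{ intros l. rewrite pp_false. simpl hits_from. rewrite Eb. simpl. ring. }
    rewrite !fold_scal, !total_prob by lia. rewrite !Rmult_1_r. apply pr_qr. exact H.
  - rewrite <- !fold_scal. f_equal; apply fold_ext; intros l.
    + rewrite pp_true. simpl hits_from. rewrite Eb. simpl. ring.
    + rewrite pp_false. simpl hits_from. rewrite Eb. simpl. ring.
Qed.

Lemma E0_nonneg x y : 0 <= E 0 x y 0.
Proof. rewrite E_0. destruct (_ && _)%bool; lra. Qed.

Lemma H_le_h L x y : (1 <= x)%nat -> (1 <= y)%nat -> E 0 x y L <= h x y.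
Proof.
  revert x y; induction L; intros x y Hx Hy.
  - rewrite E_0. simpl. destruct (Nat.eqb x y) eqn:Ex.
    + apply Nat.eqb_eq in Ex. subst. rewrite h_diag by lia. lra.
    + apply h_nonneg.
  - rewrite E_S by lia. simpl. destruct (Nat.eqb x y) eqn:Ex.
    + apply Nat.eqb_eq in Ex. subst. rewrite h_diag by lia. lra.
    + apply Nat.eqb_neq in Ex. rewrite (h_harm x y Ex). unfold Pf.
      pose proof (pr_nonneg x y); pose proof (qr_nonneg x y).
      pose proof (IHL (S x) y ltac:(lia) Hy); pose proof (IHL x (S y) Hx ltac:(lia)).
      apply Rplus_le_compat; apply Rmult_le_compat_l; auto.
Qed.

Lemma h_minus_H L x y : (1 <= x)%nat -> (1 <= y)%nat -> h x y - E 0 x y L <= V L x y.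
Proof.
  revert x y; induction L; intros x y Hx Hy.
  - unfold V. simpl. pose proof (E0_nonneg x y). lra.
  - rewrite E_S by lia. simpl. destruct (Nat.eqb x y) eqn:Ex.
    + apply Nat.eqb_eq in Ex. subst. rewrite h_diag by lia. pose proof (V_nonneg (S L) y y). lra.
    + apply Nat.eqb_neq in Ex. rewrite (h_harm x y Ex). unfold Pf. rewrite V_step.
      pose proof (pr_nonneg x y); pose proof (qr_nonneg x y).
      pose proof (IHL (S x) y ltac:(lia) Hy); pose proof (IHL x (S y) Hx ltac:(lia)).
      assert (pr x y * (h (S x) y - E 0 (S x) y L) <= pr x y * V L (S x) y) by (apply Rmult_le_compat_l; auto).
      assert (qr x y * (h x (S y) - E 0 x (S y) L) <= qr x y * V L x (S y)) by (apply Rmult_le_compat_l; auto).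
      lra.
Qed.

Lemma E_lim t x y : (1 <= x)%nat -> (1 <= y)%nat -> is_lim_seq (fun N => E t x y N) (V t x y).
Proof.
  revert x y; induction t; intros x y Hx Hy.
  - apply is_lim_seq_le_le with (fun L => h x y - V L x y) (fun _ => h x y).
    + intros L. split. pose proof (h_minus_H L x y Hx Hy); lra. apply H_le_h; auto.
    + unfold V at 2. simpl Op. replace (Finite (h x y)) with (Finite (h x y - 0)) by (f_equal; ring).
      apply is_lim_seq_minus'. apply is_lim_seq_const. apply V_lim; auto.
    + unfold V. simpl. apply is_lim_seq_const.
  - apply is_lim_seq_incr_1.
    apply is_lim_seq_ext with (fun N => pr x y * E t (S x) y N + qr x y * E t x (S y) N).
    { intros N. rewrite E_S by lia. reflexivity. }
    rewrite V_step. apply is_lim_seq_plus'; apply is_lim_seq_mult'; try apply is_lim_seq_const; apply IHt; lia.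
Qed.

Lemma prob_T_ge_V t x y : (1 <= x)%nat -> (1 <= y)%nat -> prob_T_ge 1 x y t = V t x y.
Proof.
  intros Hx Hy. unfold prob_T_ge.
  pose proof (is_lim_seq_unique _ _ (E_lim t x y Hx Hy)) as HL. unfold E in HL.
  rewrite HL. reflexivity.
Qed.


Lemma is_lim_seq_sqrt (u : nat -> R) (l : R) : is_lim_seq u l -> is_lim_seq (fun n => sqrt (u n)) (sqrt l).
Proof.
  intros H. unfold is_lim_seq in *. eapply filterlim_comp. exact H.
  apply continuous_sqrt.
Qed.

Definition W (n : nat) : R := RInt (fun x => sin x ^ n) 0 (PI / 2).

Lemma ex_W n : ex_RInt (fun x => sin x ^ n) 0 (PI / 2).
Proof.
  apply (@ex_RInt_continuous R_CompleteNormedModule). intros z _. apply (@ex_derive_continuous R_AbsRing R_NormedModule). auto_derive. trivial.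
Qed.

Lemma W_0 : W 0 = PI / 2.
Proof. unfold W. simpl. rewrite RInt_const. unfold scal; simpl; unfold mult; simpl. ring. Qed.

Lemma W_1 : W 1 = 1.
Proof.
  unfold W. apply is_RInt_unique.
  replace 1 with (minus ((fun x => - cos x) (PI / 2)) ((fun x => - cos x) 0))
    by (simpl; rewrite cos_PI2, cos_0; unfold minus, plus, opp; simpl; ring).
  apply (@is_RInt_derive R_CompleteNormedModule (fun x => - cos x)).
  - intros x _. auto_derive. trivial. ring.
  - intros x _. apply (@ex_derive_continuous R_AbsRing R_NormedModule). auto_derive. trivial.
Qed.

Lemma W_rec n : INR (S (S n)) * W (S (S n)) = INR (S n) * W n.
Proof.
  assert (H : is_RInt (fun x => INR (S n) * sin x ^ n - INR (S (S n)) * sin x ^ (S (S n))) 0 (PI / 2) 0).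
  { assert (HH := @is_RInt_derive R_CompleteNormedModule (fun x => sin x ^ S n * cos x)
      (fun x => INR (S n) * sin x ^ n - INR (S (S n)) * sin x ^ S (S n)) 0 (PI/2)).
    replace (minus _ _) with 0 in HH by (simpl; rewrite cos_PI2, sin_0; unfold minus, plus, opp; simpl; ring).
    apply HH.
    - intros x _. auto_derive. trivial.
      rewrite !S_INR. simpl. pose proof (sin2_cos2 x). unfold Rsqr in *.
      replace (match n with 0%nat => 1 | S _ => INR n + 1 end) with (INR n + 1) by (destruct n; simpl; ring).
      replace (1 * cos x * ((INR n + 1) * sin x ^ n) * cos x) with ((INR n + 1) * sin x ^ n * (cos x * cos x)) by ring.
      replace (cos x * cos x) with (1 - sin x * sin x) by lra. ring.
    - intros x _. apply (@ex_derive_continuous R_AbsRing R_NormedModule). auto_derive. trivial. }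
  assert (H2 : is_RInt (fun x => INR (S n) * sin x ^ n - INR (S (S n)) * sin x ^ (S (S n))) 0 (PI / 2)
                 (INR (S n) * W n - INR (S (S n)) * W (S (S n)))).
  { apply (is_RInt_minus (fun x => INR (S n) * sin x ^ n) (fun x => INR (S (S n)) * sin x ^ (S (S n)))).
    apply (is_RInt_scal (fun x => sin x ^ n)). unfold W; apply (@RInt_correct R_CompleteNormedModule), ex_W.
    apply (is_RInt_scal (fun x => sin x ^ (S (S n)))). unfold W; apply (@RInt_correct R_CompleteNormedModule), ex_W. }
  pose proof (is_RInt_unique _ _ _ _ H). pose proof (is_RInt_unique _ _ _ _ H2). lra.
Qed.

Lemma W_decr n : W (S n) <= W n.
Proof.
  unfold W. apply RInt_le. pose proof PI_RGT_0. lra. apply ex_W. apply ex_W.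
  intros x Hx. pose proof PI_RGT_0.
  assert (0 <= sin x) by (apply sin_ge_0; lra). pose proof (SIN_bound x).
  simpl. pose proof (pow_le (sin x) n H0). nra.
Qed.

Lemma W_even k : W (2 * k) = PI / 2 * cc k.
Proof.
  induction k. change (2 * 0)%nat with 0%nat. rewrite W_0, cc_0. lra.
  replace (2 * S k)%nat with (S (S (2 * k))) by lia.
  pose proof (W_rec (2 * k)) as H. rewrite cc_S.
  assert (0 < INR (S (S (2 * k)))) by (apply lt_0_INR; lia).
  assert (W (S (S (2 * k))) = INR (S (2 * k)) / INR (S (S (2 * k))) * W (2 * k)) by (field_simplify; [|lra]; apply (Rmult_eq_reg_l (INR (S (S (2 * k))))); [|lra]; field_simplify; lra).
  rewrite H1, IHk. rewrite !S_INR, mult_INR. simpl (INR 2). pose proof (pos_INR k). field. lra.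
Qed.

Lemma W_odd k : INR (S (2 * k)) * cc k * W (S (2 * k)) = 1.
Proof.
  induction k. change (S (2 * 0)) with 1%nat. rewrite cc_0, W_1. simpl. ring.
  replace (S (2 * S k))%nat with (S (S (S (2 * k)))) by lia.
  pose proof (W_rec (S (2 * k))) as H. rewrite cc_S.
  replace (S (S (S (2 * k)))) with (S (2 * S k)) in * by lia.
  replace (INR (S (2 * S k)) * (cc k * (2 * INR k + 1) / (2 * INR k + 2)) * W (S (2 * S k)))
    with ((INR (S (2 * S k)) * W (S (2 * S k))) * (cc k * (2 * INR k + 1) / (2 * INR k + 2))) by ring.
  rewrite H. transitivity (INR (S (2 * k)) * cc k * W (S (2 * k))); [|exact IHk]. rewrite !S_INR, !mult_INR. simpl (INR 2). pose proof (pos_INR k). field. lra.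
Qed.

Lemma inv_lin_lim (a b : R) : 0 < a -> is_lim_seq (fun k => / (a * INR k + b)) 0.
Proof.
  intros Ha. replace (Finite 0) with (Rbar_inv p_infty) by reflexivity.
  apply is_lim_seq_inv; [|discriminate].
  apply is_lim_seq_plus with p_infty b.
  replace p_infty with (Rbar_mult a p_infty) by (simpl; destruct (Rle_dec 0 a); [destruct (Rle_lt_or_eq_dec 0 a r); [reflexivity|lra]|lra]).
  apply is_lim_seq_scal_l, is_lim_seq_INR. apply is_lim_seq_const. reflexivity.
Qed.

Lemma W_odd' k : W (S (2 * k)) = / ((2 * INR k + 1) * cc k).
Proof.
  pose proof (W_odd k) as H2. rewrite S_INR, mult_INR in H2. simpl (INR 2) in H2.
  pose proof (cc_pos k). pose proof (pos_INR k).
  apply (Rmult_eq_reg_l ((2 * INR k + 1) * cc k)); [|nra].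
  rewrite Rinv_r by nra. lra.
Qed.

Lemma wallis : is_lim_seq (fun k => INR k * PI * cc k ^ 2) 1.
Proof.
  apply is_lim_seq_le_le with (fun k => 1 - / (2 * INR k + 1)) (fun _ => 1).
  - intros k. pose proof PI_RGT_0 as HPI. pose proof (cc_pos k) as Hc. pose proof (pos_INR k) as Hk. split.
    + pose proof (W_decr (2 * k)) as H1. rewrite W_even, W_odd' in H1.
      set (c := cc k) in *.
      assert (A : 2 <= PI * (2 * INR k + 1) * c ^ 2).
      { apply Rmult_le_compat_l with (r := 2 * (2 * INR k + 1) * c) in H1; [|nra].
        replace (2 * (2 * INR k + 1) * c * / ((2 * INR k + 1) * c)) with 2 in H1 by (field; nra).
        simpl. nra. }
      apply Rmult_le_reg_r with (2 * INR k + 1); [lra|].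
      replace ((1 - / (2 * INR k + 1)) * (2 * INR k + 1)) with (2 * INR k) by (field; lra).
      nra.
    + destruct k as [|j]. simpl. lra.
      pose proof (W_decr (S (2 * j))) as H1. replace (S (S (2 * j))) with (2 * S j)%nat in H1 by lia.
      rewrite W_even, W_odd', cc_S in H1. rewrite cc_S, S_INR.
      pose proof (cc_pos j) as Hcj. pose proof (pos_INR j) as Hj.
      set (c := cc j) in *.
      assert (A : PI * c ^ 2 * (2 * INR j + 1) ^ 2 <= 2 * (2 * INR j + 2)).
      { apply Rmult_le_compat_l with (r := 2 * (2 * INR j + 1) * c * (2 * INR j + 2)) in H1; [|nra].
        replace (2 * (2 * INR j + 1) * c * (2 * INR j + 2) * (PI / 2 * (c * (2 * INR j + 1) / (2 * INR j + 2))))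
          with (PI * c ^ 2 * (2 * INR j + 1) ^ 2) in H1 by (field; lra).
        replace (2 * (2 * INR j + 1) * c * (2 * INR j + 2) * / ((2 * INR j + 1) * c))
          with (2 * (2 * INR j + 2)) in H1 by (field; nra).
        exact H1. }
      replace ((INR j + 1) * PI * (c * (2 * INR j + 1) / (2 * INR j + 2)) ^ 2)
        with (PI * c ^ 2 * (2 * INR j + 1) ^ 2 / (2 * (2 * INR j + 2))) by (field; lra).
      apply Rmult_le_reg_r with (2 * (2 * INR j + 2)); [lra|].
      field_simplify; lra.
  - replace (Finite 1) with (Finite (1 - 0)) by (f_equal; ring).
    apply is_lim_seq_minus'. apply is_lim_seq_const. apply inv_lin_lim. lra.
  - apply is_lim_seq_const.
Qed.

Lemma wallis_sqrt : is_lim_seq (fun k => cc k * sqrt (INR k)) (/ sqrt PI).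
Proof.
  pose proof PI_RGT_0.
  assert (HsP : 0 < sqrt PI) by (apply sqrt_lt_R0; lra).
  apply is_lim_seq_ext with (fun k => sqrt (INR k * PI * cc k ^ 2) * / sqrt PI).
  - intros k. pose proof (cc_pos k). pose proof (pos_INR k).
    rewrite !sqrt_mult_alt by (try apply Rmult_le_pos; try nra; lra).
    rewrite sqrt_pow2 by lra. field. lra.
  - replace (Finite (/ sqrt PI)) with (Finite (sqrt 1 * / sqrt PI)) by (rewrite sqrt_1; f_equal; ring).
    apply is_lim_seq_mult'. apply is_lim_seq_sqrt, wallis. apply is_lim_seq_const.
Qed.


Notation fct n := (INR (Factorial.fact n)).

Definition FR (c q : nat) : R := fct (q + c) / (fct q * INR q ^ c).

Lemma FR_lim c : is_lim_seq (fun q => FR c q) 1.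
Proof.
  induction c.
  - apply is_lim_seq_ext with (fun _ => 1). intros q. unfold FR. rewrite Nat.add_0_r. simpl.
    pose proof (INR_fact_pos q). field. lra. apply is_lim_seq_const.
  - apply is_lim_seq_ext_loc with (fun q => FR c q * (1 + INR (S c) * / (1 * INR q + 0))).
    + exists 1%nat. intros q Hq. unfold FR. replace (q + S c)%nat with (S (q + c)) by lia.
      rewrite fact_simpl, mult_INR. pose proof (INR_fact_pos q). assert (0 < INR q) by (apply lt_0_INR; lia).
      rewrite !S_INR, plus_INR. simpl pow. assert (INR q ^ c <> 0) by (apply pow_nonzero; lra). field. repeat split; lra.
    + replace (Finite 1) with (Finite (1 * (1 + INR (S c) * 0))) by (f_equal; ring).
      apply is_lim_seq_mult'. exact IHc. apply is_lim_seq_plus'. apply is_lim_seq_const.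
      apply is_lim_seq_mult'. apply is_lim_seq_const. apply inv_lin_lim. lra.
Qed.

Lemma filterlim_lin (m c : nat) : (1 <= m)%nat -> filterlim (fun q => m * q + c)%nat eventually eventually.
Proof.
  intros Hm P [N HN]. exists N. intros q Hq. apply HN. nia.
Qed.

Lemma FR2_lim c : is_lim_seq (fun q => FR c (2 * q)) 1.
Proof.
  apply (is_lim_seq_subseq (FR c) 1 (fun q => 2 * q)%nat). 
  - intros P HP. apply (filterlim_lin 2 0 ltac:(lia)) in HP. destruct HP as [N HN]. exists N. intros q Hq.
    specialize (HN q Hq). simpl in HN. simpl. rewrite !Nat.add_0_r in *. exact HN.
  - apply FR_lim.
Qed.

Lemma w_diag_fact a b q :
  w (2 * q + S a + S b) (S a) (S b) (q + S b) =
  fct (2 * q + (a + b + 2)) * fct (q + (a + b + 1)) * fct (q + (a + b + 1)) * fct (a + b + 1)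
  / (fct (q + (b + 1)) * fct (q + (a + 1)) * fct (2 * q + (2 * a + 2 * b + 3)) * fct a * fct b).
Proof.
  rewrite w_closed by lia. unfold Binomial.C.
  pose proof (Rf_fact (S a) (q + S b) ltac:(lia)) as H1.
  pose proof (Rf_fact (S b) (2 * q + S a + S b - (q + S b)) ltac:(lia)) as H2.
  pose proof (Rf_fact (S a + S b) (2 * q + S a + S b) ltac:(lia)) as H3.
  replace (S a - 1)%nat with a in H1 by lia. replace (S b - 1)%nat with b in H2 by lia.
  replace (S a + S b - 1)%nat with (a + b + 1)%nat in H3 by lia.
  replace (S a + (q + S b) - 1)%nat with (q + (a + b + 1))%nat in H1 by lia.
  replace (S b + (2 * q + S a + S b - (q + S b)) - 1)%nat with (q + (a + b + 1))%nat in H2 by lia.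
  replace (S a + S b + (2 * q + S a + S b) - 1)%nat with (2 * q + (2 * a + 2 * b + 3))%nat in H3 by lia.
  replace (2 * q + S a + S b - (q + S b))%nat with (q + (a + 1))%nat in * by lia.
  replace (2 * q + S a + S b)%nat with (2 * q + (a + b + 2))%nat in * by lia.
  replace (q + S b)%nat with (q + (b + 1))%nat in * by lia.
  pose proof (INR_fact_pos a). pose proof (INR_fact_pos b). pose proof (INR_fact_pos (a + b + 1)).
  pose proof (INR_fact_pos (q + (b + 1))). pose proof (INR_fact_pos (q + (a + 1))).
  assert (E1 : Rf (S a) (q + (b + 1)) = fct (q + (a + b + 1)) / fct a) by (rewrite <- H1; field; lra).
  assert (E2 : Rf (S b) (q + (a + 1)) = fct (q + (a + b + 1)) / fct b) by (rewrite <- H2; field; lra).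
  assert (E3 : Rf (S a + S b) (2 * q + (a + b + 2)) = fct (2 * q + (2 * a + 2 * b + 3)) / fct (a + b + 1)) by (rewrite <- H3; field; lra).
  rewrite E1, E2, E3.
  pose proof (INR_fact_pos (2 * q + (2 * a + 2 * b + 3))).
  field. repeat split; lra.
Qed.

Definition Kc a b := fct (a + b + 1) / (fct a * fct b).

Lemma wq_ident a b q : (1 <= q)%nat ->
  w (2 * q + S a + S b) (S a) (S b) (q + S b) * INR q =
  Kc a b / 2 ^ (a + b + 1) * (FR (a + b + 1) q * FR (a + b + 1) q * FR (a + b + 2) (2 * q)
    / (FR (b + 1) q * FR (a + 1) q * FR (2 * a + 2 * b + 3) (2 * q))).
Proof.
  intros Hq. rewrite w_diag_fact. unfold FR, Kc.
  rewrite mult_INR. simpl (INR 2).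
  assert (Q : 0 < INR q) by (apply lt_0_INR; lia).
  rewrite !Rpow_mult_distr.
  replace (a + b + 1)%nat with (a + b + 1)%nat by reflexivity.
  rewrite !pow_add. simpl pow.
  replace (2 * a + 2 * b + 3)%nat with (a + a + (b + b) + 3)%nat by lia.
  rewrite !pow_add. simpl pow.
  pose proof (INR_fact_pos a). pose proof (INR_fact_pos b). pose proof (INR_fact_pos (a + b + 1)).
  pose proof (INR_fact_pos (q + (b + 1))). pose proof (INR_fact_pos (q + (a + 1))).
  pose proof (INR_fact_pos (2 * q + (2 * a + 2 * b + 3))).
  pose proof (INR_fact_pos (q + (a + b + 1))). pose proof (INR_fact_pos (2 * q + (a + b + 2))).
  pose proof (INR_fact_pos q). pose proof (INR_fact_pos (2 * q)).
  assert (INR q ^ a <> 0) by (apply pow_nonzero; lra).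
  assert (INR q ^ b <> 0) by (apply pow_nonzero; lra).
  assert (2 ^ a <> 0) by (apply pow_nonzero; lra).
  assert (2 ^ b <> 0) by (apply pow_nonzero; lra).
  replace (2 * a + 2 * b + 3)%nat with (a + a + (b + b) + 3)%nat by lia.
  replace (1 + 1) with 2 by ring.
  field. repeat split; try lra. apply not_0_INR, Factorial.fact_neq_0.
Qed.

Lemma wq_lim a b : is_lim_seq (fun q => w (2 * q + S a + S b) (S a) (S b) (q + S b) * INR q) (Kc a b / 2 ^ (a + b + 1)).
Proof.
  apply is_lim_seq_ext_loc with (fun q => Kc a b / 2 ^ (a + b + 1) * (FR (a + b + 1) q * FR (a + b + 1) q * FR (a + b + 2) (2 * q)
    / (FR (b + 1) q * FR (a + 1) q * FR (2 * a + 2 * b + 3) (2 * q)))).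
  - exists 1%nat. intros q Hq. symmetry. apply wq_ident. lia.
  - replace (Finite (Kc a b / 2 ^ (a + b + 1))) with (Finite (Kc a b / 2 ^ (a + b + 1) * (1 * 1 * 1 / (1 * 1 * 1)))) by (f_equal; field; apply pow_nonzero; lra).
    apply is_lim_seq_mult'. apply is_lim_seq_const.
    apply is_lim_seq_div'; [| |lra].
    + repeat apply is_lim_seq_mult'; try apply FR_lim; apply FR2_lim.
    + repeat apply is_lim_seq_mult'; try apply FR_lim; apply FR2_lim.
Qed.

Lemma cc_shift_lim n : is_lim_seq (fun q => cc (q + n) * sqrt (INR q)) (/ sqrt PI).
Proof.
  apply is_lim_seq_ext_loc with (fun q => (cc (q + n) * sqrt (INR (q + n))) * sqrt (1 - INR n * / (1 * INR q + INR n))).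
  - exists 1%nat. intros q Hq. rewrite plus_INR.
    assert (0 < INR q) by (apply lt_0_INR; lia). pose proof (pos_INR n).
    rewrite Rmult_assoc, <- sqrt_mult_alt by lra.
    f_equal. f_equal. field. lra.
  - replace (Finite (/ sqrt PI)) with (Finite (/ sqrt PI * sqrt (1 - INR n * 0))) by (f_equal; rewrite Rmult_0_r, Rminus_0_r, sqrt_1; ring).
    apply is_lim_seq_mult'.
    + pose proof (is_lim_seq_subseq (fun k => cc k * sqrt (INR k)) (/ sqrt PI) (fun q => 1 * q + n)%nat (filterlim_lin 1 n ltac:(lia)) wallis_sqrt) as HW.
      eapply is_lim_seq_ext; [|exact HW]. intros q. simpl. rewrite Nat.add_0_r. reflexivity.
    + apply is_lim_seq_sqrt. apply is_lim_seq_minus'. apply is_lim_seq_const.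
      apply is_lim_seq_mult'. apply is_lim_seq_const. apply inv_lin_lim. lra.
Qed.

Definition dd a b q := Op (2 * q + S a + S b) g (S a) (S b).

Lemma dd_lim a b : is_lim_seq (fun q => dd a b q * (INR q * sqrt (INR q))) (Kc a b / 2 ^ (a + b + 1) / sqrt PI).
Proof.
  apply is_lim_seq_ext with (fun q => (w (2 * q + S a + S b) (S a) (S b) (q + S b) * INR q) * (cc (q + (S a + S b)) * sqrt (INR q))).
  - intros q. unfold dd. rewrite Op_g_even. replace (q + S a + S b)%nat with (q + (S a + S b))%nat by lia. ring.
  - apply is_lim_seq_mult'. apply wq_lim. apply cc_shift_lim.
Qed.


Lemma sq_I1 q : 0 < q -> / sqrt q - / sqrt (q + 1) <= / (2 * q * sqrt q).
Proof.
  intros Hq. pose proof (sqrt_lt_R0 q Hq) as Hs. pose proof (sqrt_lt_R0 (q+1) ltac:(lra)) as Hr.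
  pose proof (sqrt_sqrt q ltac:(lra)) as Es. pose proof (sqrt_sqrt (q+1) ltac:(lra)) as Er.
  set (s := sqrt q) in *. set (r := sqrt (q + 1)) in *.
  assert (s < r) by (destruct (Rlt_or_le s r) as [?|Hle]; [auto|]; assert (s * s >= r * r) by (apply Rle_ge, Rmult_le_compat; lra); nra).
  assert (E : / s - / r = / (s * r * (r + s))).
  { assert (D : r * r - s * s = 1) by lra.
    apply (Rmult_eq_reg_r (s * r * (r + s))); [|nra].
    rewrite Rinv_l by nra. field_simplify; try lra. }
  rewrite E. apply Rinv_le_contravar. nra. nra.
Qed.

Lemma sq_I2 q : 0 < q -> / (2 * (q + 1) * sqrt (q + 1)) <= / sqrt q - / sqrt (q + 1).
Proof.
  intros Hq. pose proof (sqrt_lt_R0 q Hq) as Hs. pose proof (sqrt_lt_R0 (q+1) ltac:(lra)) as Hr.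
  pose proof (sqrt_sqrt q ltac:(lra)) as Es. pose proof (sqrt_sqrt (q+1) ltac:(lra)) as Er.
  set (s := sqrt q) in *. set (r := sqrt (q + 1)) in *.
  assert (s < r) by (destruct (Rlt_or_le s r) as [?|Hle]; [auto|]; assert (s * s >= r * r) by (apply Rle_ge, Rmult_le_compat; lra); nra).
  assert (E : / s - / r = / (s * r * (r + s))).
  { assert (D : r * r - s * s = 1) by lra.
    apply (Rmult_eq_reg_r (s * r * (r + s))); [|nra].
    rewrite Rinv_l by nra. field_simplify; try lra. }
  rewrite E. apply Rinv_le_contravar. nra. nra.
Qed.

Lemma mono_le0 (G : nat -> R) M : (forall q, (M <= q)%nat -> G q <= G (S q)) -> is_lim_seq G 0 ->
  forall q, (M <= q)%nat -> G q <= 0.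
Proof.
  intros Hm Hl q Hq. destruct (Rle_or_lt (G q) 0) as [?|Hp]; auto. exfalso.
  apply is_lim_seq_spec in Hl. destruct (Hl (mkposreal _ Hp)) as [N HN].
  assert (HQ : forall k, G q <= G (q + k)%nat).
  { induction k. rewrite Nat.add_0_r; lra. replace (q + S k)%nat with (S (q + k)) by lia.
    pose proof (Hm (q + k)%nat ltac:(lia)). lra. }
  specialize (HN (q + N)%nat ltac:(lia)). specialize (HQ N). simpl in HN.
  rewrite Rminus_0_r in HN. apply Rabs_def2 in HN. lra.
Qed.

Lemma mono_ge0 (G : nat -> R) M : (forall q, (M <= q)%nat -> G (S q) <= G q) -> is_lim_seq G 0 ->
  forall q, (M <= q)%nat -> 0 <= G q.
Proof.
  intros Hm Hl q Hq. assert (- G q <= 0); [|lra].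
  apply (mono_le0 (fun q => - G q) M). intros; pose proof (Hm q0 H); lra.
  pose proof (proj1 (is_lim_seq_opp G 0) Hl) as Ho. simpl in Ho. replace (-0) with 0 in Ho by ring. exact Ho. exact Hq.
Qed.

Lemma inv_sqrt_lim : is_lim_seq (fun q => / sqrt (INR q)) 0.
Proof.
  replace (Finite 0) with (Rbar_inv p_infty) by reflexivity.
  apply is_lim_seq_inv; [|discriminate].
  unfold is_lim_seq. eapply filterlim_comp. apply is_lim_seq_INR. apply filterlim_sqrt_p.
Qed.

Lemma sqrt_ratio q : 0 < q -> sqrt (q + 1) * / sqrt q <= 1 + / q.
Proof.
  intros Hq. pose proof (sqrt_lt_R0 q Hq) as Hs. pose proof (sqrt_lt_R0 (q+1) ltac:(lra)) as Hr.
  pose proof (sqrt_sqrt q ltac:(lra)) as Es. pose proof (sqrt_sqrt (q+1) ltac:(lra)) as Er.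
  set (s := sqrt q) in *. set (r := sqrt (q + 1)) in *.
  assert (r * s <= q + 1) by nra.
  apply Rmult_le_reg_r with (s * q); [nra|].
  replace (r * / s * (s * q)) with (r * q) by (field; lra).
  replace ((1 + / q) * (s * q)) with (s * (q + 1)) by (field; lra).
  nra.
Qed.

Lemma tail_asym (u d : nat -> R) (L : R) :
  0 < L -> (forall q, 0 <= d q) -> (forall q, u q = d q + u (S q)) -> is_lim_seq u 0 ->
  is_lim_seq (fun q => d q * (INR q * sqrt (INR q))) L ->
  is_lim_seq (fun q => u q * sqrt (INR q)) (2 * L).
Proof.
  intros HL Hd Hu Hu0 HdL.
  apply is_lim_seq_spec. intros eps.
  set (e := Rmin (eps / 8) (L / 2)).
  assert (He : 0 < e) by (unfold e; apply Rmin_pos; pose proof (cond_pos eps); lra).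
  assert (He1 : e <= eps / 8) by apply Rmin_l.
  assert (He2 : e <= L / 2) by apply Rmin_r.
  apply is_lim_seq_spec in HdL. destruct (HdL (mkposreal e He)) as [N1 HN1]. simpl in HN1.
  assert (Hdb : forall q, (N1 <= q)%nat -> (1 <= q)%nat ->
     (L - e) * / (INR q * sqrt (INR q)) <= d q <= (L + e) * / (INR q * sqrt (INR q))).
  { intros q Hq Hq1. specialize (HN1 q Hq). apply Rabs_def2 in HN1.
    assert (0 < INR q) by (apply lt_0_INR; lia). pose proof (sqrt_lt_R0 _ H).
    assert (0 < INR q * sqrt (INR q)) by nra.
    split; apply Rmult_le_reg_r with (INR q * sqrt (INR q)); auto;
      rewrite Rmult_assoc, Rinv_l by lra; lra. }
  assert (Hup : forall q, (S N1 <= q)%nat -> u (S q) <= 2 * (L + e) * / sqrt (INR q)).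
  { intros q Hq.
    assert (0 <= 2 * (L + e) * / sqrt (INR q) - u (S q)); [|lra].
    apply (mono_ge0 (fun q => 2 * (L + e) * / sqrt (INR q) - u (S q)) (S N1)); auto.
    - intros k Hk. rewrite (Hu (S k)). rewrite S_INR.
      assert (0 < INR k) by (apply lt_0_INR; lia).
      pose proof (sq_I2 (INR k) H).
      destruct (Hdb (S k) ltac:(lia) ltac:(lia)) as [_ Hb]. rewrite S_INR in Hb.
      assert (d (S k) <= 2 * (L + e) * (/ sqrt (INR k) - / sqrt (INR k + 1))).
      { eapply Rle_trans. exact Hb.
        replace ((L + e) * / ((INR k + 1) * sqrt (INR k + 1))) with (2 * (L + e) * / (2 * (INR k + 1) * sqrt (INR k + 1))).
        apply Rmult_le_compat_l. lra. exact H0.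
        pose proof (sqrt_lt_R0 (INR k + 1) ltac:(lra)). field. lra. }
      lra.
    - replace (Finite 0) with (Finite (2 * (L + e) * 0 - 0)) by (f_equal; ring).
      apply is_lim_seq_minus'. apply is_lim_seq_mult'. apply is_lim_seq_const. apply inv_sqrt_lim.
      apply (is_lim_seq_incr_1 u). exact Hu0. }
  assert (Hlow : forall q, (S N1 <= q)%nat -> 2 * (L - e) * / sqrt (INR q) <= u q).
  { intros q Hq.
    assert (0 <= u q - 2 * (L - e) * / sqrt (INR q)); [|lra].
    apply (mono_ge0 (fun q => u q - 2 * (L - e) * / sqrt (INR q)) (S N1)); auto.
    - intros k Hk. rewrite (Hu k). rewrite S_INR.
      assert (0 < INR k) by (apply lt_0_INR; lia).
      pose proof (sq_I1 (INR k) H).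
      destruct (Hdb k ltac:(lia) ltac:(lia)) as [Hb _].
      assert (2 * (L - e) * (/ sqrt (INR k) - / sqrt (INR k + 1)) <= d k).
      { eapply Rle_trans; [|exact Hb].
        replace ((L - e) * / (INR k * sqrt (INR k))) with (2 * (L - e) * / (2 * INR k * sqrt (INR k))).
        apply Rmult_le_compat_l. lra. exact H0.
        pose proof (sqrt_lt_R0 (INR k) H). field. lra. }
      lra.
    - replace (Finite 0) with (Finite (0 - 2 * (L - e) * 0)) by (f_equal; ring).
      apply is_lim_seq_minus'. exact Hu0. apply is_lim_seq_mult'. apply is_lim_seq_const. apply inv_sqrt_lim. }
  destruct (archimed_cor1 (eps / (4 * (L + e)))) as [N2 [HN2 HN2']].
  { pose proof (cond_pos eps). apply Rmult_lt_0_compat; [lra|]. apply Rinv_0_lt_compat; lra. }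
  exists (N1 + N2 + 2)%nat. intros n Hn.
  destruct n as [|q]; [lia|].
  assert (Hq0 : 0 < INR q) by (apply lt_0_INR; lia).
  assert (HSq : 0 < INR (S q)) by (apply lt_0_INR; lia).
  pose proof (sqrt_lt_R0 _ Hq0) as Hsq. pose proof (sqrt_lt_R0 _ HSq) as HsSq.
  apply Rabs_def1.
  - pose proof (Hup q ltac:(lia)) as H1.
    pose proof (sqrt_ratio (INR q) Hq0) as H2. rewrite <- S_INR in H2.
    assert (H3 : / INR q <= / INR N2).
    { apply Rinv_le_contravar. apply lt_0_INR; lia. apply le_INR; lia. }
    assert (u (S q) * sqrt (INR (S q)) <= 2 * (L + e) * (1 + / INR q)).
    { apply Rle_trans with (2 * (L + e) * / sqrt (INR q) * sqrt (INR (S q))).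
      apply Rmult_le_compat_r; lra.
      replace (2 * (L + e) * / sqrt (INR q) * sqrt (INR (S q))) with (2 * (L + e) * (sqrt (INR (S q)) * / sqrt (INR q))) by ring.
      apply Rmult_le_compat_l; lra. }
    assert (2 * (L + e) * / INR q < eps / 2).
    { apply Rle_lt_trans with (2 * (L + e) * / INR N2). apply Rmult_le_compat_l; lra.
      apply Rmult_lt_compat_l with (r := 2 * (L + e)) in HN2; [|lra].
      replace (2 * (L + e) * (eps / (4 * (L + e)))) with (eps / 2) in HN2 by (field; lra). exact HN2. }
    lra.
  - pose proof (Hlow (S q) ltac:(lia)) as H1.
    apply Rmult_le_compat_r with (r := sqrt (INR (S q))) in H1; [|lra].
    rewrite Rmult_assoc, Rinv_l in H1 by lra. lra.
Qed.


Lemma INR_fact_pos' n : 0 < fct n.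
Proof. apply lt_0_INR, Factorial.lt_O_fact. Qed.

Definition J (p q : nat) : R := RInt (fun s => s ^ p * (1 - s) ^ q) 0 1.

Lemma ex_J p q : ex_RInt (fun s => s ^ p * (1 - s) ^ q) 0 1.
Proof.
  apply (@ex_RInt_continuous R_CompleteNormedModule). intros z _.
  apply (@ex_derive_continuous R_AbsRing R_NormedModule). auto_derive. trivial.
Qed.

Lemma J_0 p : J p 0 = / INR (S p).
Proof.
  unfold J. apply is_RInt_unique.
  assert (HH := @is_RInt_derive R_CompleteNormedModule (fun s => s ^ S p / INR (S p))
      (fun s => s ^ p * (1 - s) ^ 0) 0 1).
  replace (minus _ _) with (/ INR (S p)) in HH.
  2:{ change (minus ((fun s => s ^ S p / INR (S p)) 1) ((fun s => s ^ S p / INR (S p)) 0)) with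
        (1 ^ S p / INR (S p) - 0 ^ S p / INR (S p)).
      rewrite pow1, pow_i by lia. unfold Rdiv. rewrite Rmult_0_l, Rmult_1_l, Rminus_0_r. reflexivity. }
  apply HH.
  - intros x _. auto_derive. trivial.
    replace (match p with 0%nat => 1 | S _ => INR p + 1 end) with (INR p + 1) by (destruct p; simpl; ring).
    pose proof (pos_INR p). simpl. field. lra.
  - intros x _. apply (@ex_derive_continuous R_AbsRing R_NormedModule). auto_derive. trivial.
Qed.

Lemma J_rec p q : INR (S p) * J p (S q) = INR (S q) * J (S p) q.
Proof.
  assert (H : is_RInt (fun s => INR (S p) * (s ^ p * (1 - s) ^ S q) - INR (S q) * (s ^ S p * (1 - s) ^ q)) 0 1 0).
  { assert (HH := @is_RInt_derive R_CompleteNormedModule (fun s => s ^ S p * (1 - s) ^ S q)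
      (fun s => INR (S p) * (s ^ p * (1 - s) ^ S q) - INR (S q) * (s ^ S p * (1 - s) ^ q)) 0 1).
    replace (minus _ _) with 0 in HH by (simpl; unfold minus, plus, opp; simpl; ring).
    apply HH.
    - intros x _. auto_derive. trivial.
      rewrite !S_INR. simpl.
      replace (match p with 0%nat => 1 | S _ => INR p + 1 end) with (INR p + 1) by (destruct p; simpl; ring).
      replace (match q with 0%nat => 1 | S _ => INR q + 1 end) with (INR q + 1) by (destruct q; simpl; ring).
      replace (1 + - x) with (1 - x) by ring. ring.
    - intros x _. apply (@ex_derive_continuous R_AbsRing R_NormedModule). auto_derive. trivial. }
  assert (H2 : is_RInt (fun s => INR (S p) * (s ^ p * (1 - s) ^ S q) - INR (S q) * (s ^ S p * (1 - s) ^ q)) 0 1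
                 (INR (S p) * J p (S q) - INR (S q) * J (S p) q)).
  { apply (is_RInt_minus (fun s => INR (S p) * (s ^ p * (1 - s) ^ S q)) (fun s => INR (S q) * (s ^ S p * (1 - s) ^ q))).
    apply (is_RInt_scal (fun s => s ^ p * (1 - s) ^ S q)). unfold J; apply (@RInt_correct R_CompleteNormedModule), ex_J.
    apply (is_RInt_scal (fun s => s ^ S p * (1 - s) ^ q)). unfold J; apply (@RInt_correct R_CompleteNormedModule), ex_J. }
  pose proof (is_RInt_unique _ _ _ _ H). pose proof (is_RInt_unique _ _ _ _ H2). lra.
Qed.

Lemma J_val q : forall p, J p q = fct p * fct q / fct (p + q + 1).
Proof.
  induction q; intros p.
  - rewrite J_0. rewrite Nat.add_0_r, Nat.add_1_r, fact_simpl, mult_INR. simpl (fct 0).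
    pose proof (INR_fact_pos' p). assert (0 < INR (S p)) by (apply lt_0_INR; lia). field. lra.
  - pose proof (J_rec p q) as H. rewrite IHq in H.
    assert (0 < INR (S p)) by (apply lt_0_INR; lia).
    apply (Rmult_eq_reg_l (INR (S p))); [|lra]. rewrite H.
    replace (S p + q + 1)%nat with (p + S q + 1)%nat by lia.
    rewrite (fact_simpl p), (fact_simpl q), !mult_INR. 
    pose proof (INR_fact_pos' p). pose proof (INR_fact_pos' q). pose proof (INR_fact_pos' (p + S q + 1)).
    field. lra.
Qed.


Lemma Rp_val n : Rpower 2 (INR n - 5 / 2) = 2 ^ n / (4 * sqrt 2).
Proof.
  replace (INR n - 5 / 2) with (INR n + - (INR 2 + / 2)) by (simpl; field).
  rewrite Rpower_plus, Rpower_Ropp, Rpower_plus, !Rpower_pow, Rpower_sqrt by lra.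
  simpl. field. pose proof (sqrt_lt_R0 2 ltac:(lra)). lra.
Qed.

Lemma Beta_val a b : Beta (S a) (S b) = fct a * fct b / fct (a + b + 1).
Proof. unfold Beta. simpl (S a - 1)%nat. simpl (S b - 1)%nat. rewrite !Nat.sub_0_r. apply (J_val b a). Qed.

Lemma parity_lim (f : nat -> R) c (l : R) : is_lim_seq (fun q => f (2 * q + c)%nat) l ->
  is_lim_seq (fun q => f (2 * q + c + 1)%nat) l -> is_lim_seq f l.
Proof.
  intros H1 H2. apply is_lim_seq_spec in H1, H2. apply is_lim_seq_spec. intros eps.
  destruct (H1 eps) as [N1 HN1]. destruct (H2 eps) as [N2 HN2].
  exists (2 * (N1 + N2) + c)%nat. intros n Hn.
  destruct (Nat.Even_or_Odd (n - c)) as [[q Hq]|[q Hq]].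
  - replace n with (2 * q + c)%nat by lia. apply HN1. lia.
  - replace n with (2 * q + c + 1)%nat by lia. apply HN2. lia.
Qed.

Section Main.
Variables a b : nat.
Let u q := V (2 * q + S a + S b) (S a) (S b).
Let L := Kc a b / 2 ^ (a + b + 1) / sqrt PI.

Lemma L_pos : 0 < L.
Proof.
  unfold L, Kc. pose proof (INR_fact_pos a). pose proof (INR_fact_pos b). pose proof (INR_fact_pos (a + b + 1)).
  pose proof PI_RGT_0. pose proof (sqrt_lt_R0 PI ltac:(lra)). assert (0 < 2 ^ (a + b + 1)) by (apply pow_lt; lra).
  apply Rmult_lt_0_compat; [|apply Rinv_0_lt_compat; lra].
  apply Rmult_lt_0_compat; [|apply Rinv_0_lt_compat; lra].
  apply Rmult_lt_0_compat; [lra|apply Rinv_0_lt_compat; nra].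
Qed.

Lemma V_odd_step q : V (2 * q + S a + S b + 1) (S a) (S b) = u (S q).
Proof.
  pose proof (V_diff (2 * q + S a + S b + 1) (S a) (S b) ltac:(lia) ltac:(lia)) as H.
  rewrite Op_g_odd in H. unfold u. replace (2 * S q + S a + S b)%nat with (S (2 * q + S a + S b + 1)) by lia. lra.
Qed.

Lemma u_step q : u q = dd a b q + u (S q).
Proof.
  pose proof (V_diff (2 * q + S a + S b) (S a) (S b) ltac:(lia) ltac:(lia)) as H.
  rewrite <- V_odd_step. unfold u, dd. replace (2 * q + S a + S b + 1)%nat with (S (2 * q + S a + S b)) by lia. lra.
Qed.

Lemma u_lim : is_lim_seq u 0.
Proof.
  pose proof (is_lim_seq_subseq (fun t => V t (S a) (S b)) 0 (fun q => 2 * q + (S a + S b))%nat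
    (filterlim_lin 2 (S a + S b) ltac:(lia)) (V_lim (S a) (S b) ltac:(lia) ltac:(lia))) as HH.
  eapply is_lim_seq_ext; [|exact HH]. intros q. unfold u. simpl. f_equal. lia.
Qed.

Lemma u_asym : is_lim_seq (fun q => u q * sqrt (INR q)) (2 * L).
Proof.
  apply tail_asym with (dd a b).
  - apply L_pos.
  - intros q. apply Op_nonneg. intros; apply g_nonneg.
  - apply u_step.
  - apply u_lim.
  - apply dd_lim.
Qed.

Lemma V_asym : is_lim_seq (fun t => V t (S a) (S b) * sqrt (INR t)) (2 * L * sqrt 2).
Proof.
  apply (parity_lim _ (S a + S b)).
  - apply is_lim_seq_ext_loc with (fun q => (u q * sqrt (INR q)) * sqrt (2 + INR (S a + S b) * / (1 * INR q + 0))).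
    + exists 1%nat. intros q Hq. unfold u.
      assert (0 < INR q) by (apply lt_0_INR; lia). pose proof (pos_INR (S a + S b)).
      replace (2 * q + (S a + S b))%nat with (2 * q + S a + S b)%nat by lia.
      rewrite Rmult_assoc, <- sqrt_mult_alt by lra. f_equal. f_equal.
      replace (2 * q + S a + S b)%nat with (2 * q + (S a + S b))%nat by lia.
      rewrite (plus_INR (2 * q) (S a + S b)), mult_INR. simpl (INR 2). field. lra.
    + apply is_lim_seq_mult'. apply u_asym.
      replace (Finite (sqrt 2)) with (Finite (sqrt (2 + INR (S a + S b) * 0))) by (rewrite Rmult_0_r, Rplus_0_r; reflexivity).
      apply is_lim_seq_sqrt. apply (is_lim_seq_plus' (fun _ => 2) _ 2). apply is_lim_seq_const.
      apply is_lim_seq_mult'. apply is_lim_seq_const. apply inv_lin_lim. lra.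
  - apply is_lim_seq_ext with (fun q => (u (S q) * sqrt (INR (S q))) * sqrt (2 + (INR (S a + S b) - 1) * / (1 * INR q + 1))).
    + intros q. replace (2 * q + (S a + S b) + 1)%nat with (2 * q + S a + S b + 1)%nat by lia.
      rewrite V_odd_step.
      assert (0 < INR (S q)) by (apply lt_0_INR; lia). pose proof (pos_INR (a + b)).
      assert (0 < 2 + (INR (S a + S b) - 1) * / (1 * INR q + 1)).
      { pose proof (pos_INR a); pose proof (pos_INR b). rewrite S_INR in *. rewrite plus_INR, !S_INR. apply Rplus_lt_le_0_compat. lra.
        apply Rmult_le_pos. lra. left; apply Rinv_0_lt_compat; lra. }
      rewrite Rmult_assoc, <- sqrt_mult_alt by lra. f_equal. f_equal.
      replace (2 * q + S a + S b + 1)%nat with (S (q + q + a + b + 2)) by lia. rewrite !S_INR, !plus_INR, !S_INR. pose proof (pos_INR q). simpl (INR 0). field. lra.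
    + apply is_lim_seq_mult'. apply (is_lim_seq_incr_1 (fun q => u q * sqrt (INR q))). apply u_asym.
      replace (Finite (sqrt 2)) with (Finite (sqrt (2 + (INR (S a + S b) - 1) * 0))) by (rewrite Rmult_0_r, Rplus_0_r; reflexivity).
      apply is_lim_seq_sqrt. apply (is_lim_seq_plus' (fun _ => 2) _ 2). apply is_lim_seq_const.
      apply is_lim_seq_mult'. apply is_lim_seq_const. apply inv_lin_lim. lra.
Qed.

End Main.

Theorem theorem1 (x0 y0 : nat) (hx : (1 <= x0)%nat) (hy : (1 <= y0)%nat) :
  is_lim_seq
    (fun t : nat =>
       prob_T_ge 1 x0 y0 t /
       ((1 / (Rpower 2 (INR (x0 + y0) - 5 / 2) * sqrt PI * Beta x0 y0))
          * / sqrt (INR t)))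
    1.
Proof.
  destruct x0 as [|a]; [lia|]. destruct y0 as [|b]; [lia|].
  set (C := Rpower 2 (INR (S a + S b) - 5 / 2) * sqrt PI * Beta (S a) (S b)).
  pose proof PI_RGT_0. pose proof (sqrt_lt_R0 PI ltac:(lra)). pose proof (sqrt_lt_R0 2 ltac:(lra)).
  pose proof (INR_fact_pos a). pose proof (INR_fact_pos b). pose proof (INR_fact_pos (a + b + 1)).
  assert (P2 : 0 < 2 ^ (a + b + 1)) by (apply pow_lt; lra).
  assert (HC : C = 2 * 2 ^ (a + b + 1) / (4 * sqrt 2) * sqrt PI * (fct a * fct b / fct (a + b + 1))).
  { unfold C. rewrite Rp_val, Beta_val. replace (S a + S b)%nat with (S (a + b + 1)) by lia. reflexivity. }
  assert (HCpos : 0 < C).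
  { rewrite HC. apply Rmult_lt_0_compat. apply Rmult_lt_0_compat.
    apply Rmult_lt_0_compat. lra. apply Rinv_0_lt_compat; lra. lra.
    apply Rmult_lt_0_compat. nra. apply Rinv_0_lt_compat; lra. }
  apply is_lim_seq_ext_loc with (fun t => (V t (S a) (S b) * sqrt (INR t)) * C).
  - exists 1%nat. intros t Ht. rewrite prob_T_ge_V by lia. fold C.
    assert (0 < sqrt (INR t)) by (apply sqrt_lt_R0, lt_0_INR; lia).
    field. split; lra.
  - replace (Finite 1) with (Finite (2 * (Kc a b / 2 ^ (a + b + 1) / sqrt PI) * sqrt 2 * C)).
    + apply is_lim_seq_mult'. apply V_asym. apply is_lim_seq_const.
    + f_equal. rewrite HC. unfold Kc. field. repeat split; lra.
Qed.
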